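(* Let $p$ be a prime, $n\ge1$, $d\ge2$, $I\subseteq\{0,\dots,n\}$, and let ${\bf a}_1,\dots,{\bf a}_N\in\mathbb{N}^{n+1}$ have coordinate sums $d$. Suppose $N\geq\mu_I+|U^I_{\min}|$ and that for each $u\in U^I_{\min}$ there exists $k_u$ with $1\le k_u\le|U^I_{\min}|$ such that $u={\bf a}^+_{\mu_I+k_u}+\sum_{j=1}^{\mu_I}{\bf a}_j^+$. Then the matrix $\bar A^I(\Lambda)$ is invertible (as a matrix over $\mathbb{F}_p(\Lambda_1,\dots,\Lambda_N)$, i.e. $\det\bar A^I(\Lambda)$ is a nonzero polynomial).
   Context: ${\bf a}_j^+=({\bf a}_j,1)\in\mathbb{N}^{n+2}$. The integer $\mu_I$ is defined by $\lceil |I|/d\rceil=\mu_I+1$. $U^I$ is the set of $u=(u_0,\dots,u_{n+1})\in\mathbb{N}^{n+2}$ with $\sum_{i=0}^nu_i=du_{n+1}$ and $u_i>0$ for all $i\in I$; $U^I_{\min}=\{u\in U^I: u_{n+1}=\mu_I+1\}$. The matrix $A^I(\Lambda)=[A^I_{uv}(\Lambda)]_{u,v\in U^I_{\min}}$ has entries $$A^I_{uv}(\Lambda)=(-1)^{\mu_I+1}\sum_{\nu\in\mathbb{N}^N,\ \sum_j\nu_j{\bf a}_j^+=pu-v}\frac{\Lambda_1^{\nu_1}\cdots\Lambda_N^{\nu_N}}{\nu_1!\cdots\nu_N!},$$ which lie in $(\mathbb{Q}\cap\mathbb{Z}_p)[\Lambda]$, and $\bar A^I(\Lambda)$ is its reduction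 modulo $p$. *)

(* Defs.v *)
From HB Require Import structures.
From mathcomp Require Import all_boot all_order all_algebra.
From mathcomp Require Import mpoly.
Set Implicit Arguments. Unset Strict Implicit. Unset Printing Implicit Defensive.
Import GRing.Theory Num.Theory.
Local Open Scope ring_scope.

(* Indices j = 1..N of the paper are represented by j : 'I_N (j0 = j - 1).
   Vectors in N^{n+1} are functions 'I_n.+1 -> nat; vectors in N^{n+2}
   are functions 'I_n.+2 -> nat, coordinate n+1 being ord_max. *)

(* mu1 = mu_I + 1 = ceil(|I|/d) *)
Definition mu1 (d c : nat) : nat := ((c + d.-1) %/ d)%N.

Definition aplus (n N : nat) (a : 'I_N -> 'I_n.+1 -> nat) (j : 'I_N)
  (i : 'I_n.+2) : nat :=
  if (i < n.+1)%N then a j (inord i) else 1%N.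

(* U^I_min: vectors u in N^{n+2} with sum_{i<=n} u_i = d u_{n+1},
   u_i > 0 for i in I, and u_{n+1} = mu_I + 1.  Such u have all coordinates
   bounded by d*(mu_I+1), so they live in the finite type below. *)
Definition Ubox (n d m : nat) := {ffun 'I_n.+2 -> 'I_(d * m).+1}.

Definition Umin (n d : nat) (I : {set 'I_n.+1}) : {set Ubox n d (mu1 d #|I|)} :=
  [set u : Ubox n d (mu1 d #|I|) |
     [&& (\sum_(i < n.+2 | (i < n.+1)%N) (u i : nat) == d * u ord_max)%N,
         [forall i : 'I_n.+1, (i \in I) ==> (0 < u (widen_ord (leqnSn _) i))%N]
       & (u ord_max == mu1 d #|I| :> nat)]].

(* exponent vectors nu in N^N (bounded, which loses nothing: sum nu_j
   = p u_{n+1} - v_{n+1} <= p (mu_I+1)) *)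
Definition NuBox (N p m : nat) := {ffun 'I_N -> 'I_(p * m).+1}.

(* The entry A^I_{uv}(Lambda), a polynomial in Q[Lambda_1..Lambda_N].
   The condition sum_j nu_j a_j^+ = p u - v is written
   sum_j nu_j a_j^+ + v = p u  (coordinatewise in N). *)
Definition Aentry (n N d p : nat) (I : {set 'I_n.+1})
  (a : 'I_N -> 'I_n.+1 -> nat) (u v : Ubox n d (mu1 d #|I|)) : {mpoly rat[N]} :=
  \sum_(nu : NuBox N p (mu1 d #|I|) |
          [forall i : 'I_n.+2,
             (\sum_(j < N) (nu j : nat) * aplus a j i + v i == p * u i)%N])
     (((-1) ^+ mu1 d #|I|) / ((\prod_(j < N) (nu j : nat)`!)%N)%:R)
       *: 'X_[[multinom (nu j : nat) | j < N]].

(* Reduction modulo p of a rational: num/den in lowest terms mapped to F_p.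
   (For p-integral rationals this is the usual reduction.) *)
Definition redQ (p : nat) (q : rat) : 'F_p :=
  (numq q)%:~R / (denq q)%:~R.

Definition redP (N p : nat) (P : {mpoly rat[N]}) : {mpoly 'F_p[N]} :=
  \sum_(m <- msupp P) redQ p (P@_m) *: 'X_[m].

(* The matrix \bar A^I(Lambda), rows/columns indexed by U^I_min
   (via an enumeration of U^I_min; the determinant does not depend on it). *)
Definition Abar (n N d p : nat) (I : {set 'I_n.+1})
  (a : 'I_N -> 'I_n.+1 -> nat) : 'M[{mpoly 'F_p[N]}]_(#|Umin d I|) :=
  \matrix_(r, c) redP p (Aentry p a (enum_val r) (enum_val c)).

(* Main.v *)
Require Import Defs.
From HB Require Import structures.
From mathcomp Require Import all_boot all_order all_algebra all_fingroup.
From mathcomp Require Import mpoly.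
From mathcomp Require Import zify.
Set Implicit Arguments. Unset Strict Implicit. Unset Printing Implicit Defensive.
Import GRing.Theory Num.Theory.

Lemma agm_le (x y : nat) : (2 * x * y <= x * x + y * y)%N.
Proof. have [+ _] := nat_AGM2 x y; rewrite sqrnD; nia. Qed.
Lemma agm_eq (x y : nat) : (2 * x * y = x * x + y * y)%N -> x = y.
Proof. have [_ +] := nat_AGM2 x y; rewrite sqrnD => E H.
apply/eqP; rewrite -E; apply/eqP; nia. Qed.

Lemma sum_eq_le (I : finType) (P : pred I) (x y : I -> nat) :
  (forall i, P i -> x i <= y i) ->
  \sum_(i | P i) x i = \sum_(i | P i) y i -> forall i, P i -> x i = y i.
Proof.
move=> le E.
have H := @leqif_sum I P (fun i => x i == y i) x y.
have /H [_ ] : forall i, P i -> x i <= y i ?= iff (x i == y i).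
  by move=> i Pi; apply/leqif_eq/le.
rewrite E eqxx => /esym /forall_inP F i Pi; exact/eqP/F.
Qed.

Definition ip n (x y : 'I_n -> nat) := (\sum_i x i * y i)%N.

Lemma ip_le n (x y : 'I_n -> nat) : 2 * ip x y <= ip x x + ip y y.
Proof.
rewrite /ip big_distrr -big_split /=; apply: leq_sum => i _.
by rewrite mulnA agm_le.
Qed.

Lemma ip_eq n (x y : 'I_n -> nat) : 2 * ip x y = ip x x + ip y y -> forall i, x i = y i.
Proof.
rewrite /ip big_distrr -big_split /= => E i.
apply: agm_eq; rewrite -mulnA.
by apply: (@sum_eq_le _ predT (fun i => 2 * (x i * y i)) (fun i => x i * x i + y i * y i)) => // j _;
  rewrite mulnA agm_le.
Qed.

Definition fs (N m mu0 p : nat) (jr : 'I_m -> 'I_N) (r : 'I_m) (j : 'I_N) : nat :=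
  if (j.+1 < mu0)%N then p.-1 else if j == jr r then p.-1 else 0%N.

Lemma key (m N n mu0 p : nat) (U : 'I_m -> 'I_n.+2 -> nat) (al : 'I_N -> 'I_n.+2 -> nat)
  (jr : 'I_m -> 'I_N) (s : 'S_m) (f : 'I_m -> 'I_N -> nat) :
  (0 < p)%N ->
  (forall j, al j ord_max = 1%N) ->
  (forall r, mu0 <= (jr r).+1) ->
  (forall r i, U r i = al (jr r) i + \sum_(j : 'I_N | (j.+1 < mu0)%N) al j i) ->
  (forall r r', (forall i, U r i = U r' i) -> r = r') ->
  (forall r i, \sum_j f r j * al j i + U (s r) i = p * U r i) ->
  (forall r j, f r j < p) ->
  (forall j, \sum_r f r j = \sum_r fs mu0 p jr r j) ->
  s = 1%g /\ forall r j, f r j = fs mu0 p jr r j.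
Proof.
move=> p0 almax jrnb HU Uinj Eq flt colsum.
pose S i := \sum_(j : 'I_N | (j.+1 < mu0)%N) al j i.
pose nb (j : 'I_N) := ~~ (j.+1 < mu0)%N.
have nbjr r : nb (jr r) by rewrite /nb -leqNgt.
have blk r (j : 'I_N) : (j.+1 < mu0)%N -> f r j = p.-1.
  move=> bj.
  have cs := colsum j; rewrite /fs bj in cs.
  apply: (@sum_eq_le _ predT (fun r => f r j) (fun _ => p.-1)) => // r' _.
  by have := flt r' j; lia.
pose be r i := al (jr r) i.
pose T r i := \sum_(j : 'I_N | nb j) f r j * al j i.
have EqT r i : T r i + be (s r) i = p * be r i.
  have := Eq r i; rewrite (bigID (fun j : 'I_N => (j.+1 < mu0)%N)) /=.
  rewrite (eq_bigr (fun j => p.-1 * al j i)); last by move=> j bj; rewrite blk.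
  rewrite -big_distrr /= !HU -/(S i) -/(T r i) /be.
  nia.
have rows r : \sum_(j : 'I_N | nb j) f r j = p.-1.
  have := EqT r ord_max; rewrite /T /be !almax muln1.
  rewrite (eq_bigr (fun j => f r j)) => [|j _]; last by rewrite almax muln1.
  by move=> <-; rewrite addn1.
pose Q := \sum_r ip (be r) (be r).
have Er r : \sum_(j : 'I_N | nb j) f r j * ip (al j) (be r) + ip (be (s r)) (be r) = p * ip (be r) (be r).
  rewrite /ip big_distrr /=.
  under eq_bigr do rewrite big_distrr /=.
  rewrite exchange_big /= -big_split /=; apply: eq_bigr => i _.
  by rewrite mulnA -EqT mulnDl /T big_distrl /=; congr (_ + _); apply: eq_bigr => j _; rewrite mulnA.
pose A1 := \sum_r \sum_(j : 'I_N | nb j) f r j * (2 * ip (al j) (be r)).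
pose B1 := \sum_r \sum_(j : 'I_N | nb j) f r j * (ip (al j) (al j) + ip (be r) (be r)).
pose A2 := \sum_r 2 * ip (be (s r)) (be r).
pose B2 := \sum_r (ip (be (s r)) (be (s r)) + ip (be r) (be r)).
have A12 : A1 + A2 = 2 * (p * Q).
  rewrite /A1 /A2 -big_split /Q !big_distrr /=; apply: eq_bigr => r _.
  rewrite -Er mulnDr; congr (_ + _); rewrite big_distrr; apply: eq_bigr => j _; by rewrite mulnCA.
have B1E : B1 = 2 * (p.-1 * Q).
  rewrite /B1; under eq_bigr => r _ do under eq_bigr => j _ do rewrite mulnDr.
  under eq_bigr => r _ do rewrite big_split.
  rewrite big_split /=.
  have -> : \sum_r \sum_(j : 'I_N | nb j) f r j * ip (be r) (be r) = p.-1 * Q.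
    rewrite /Q big_distrr; apply: eq_bigr => r _; by rewrite -big_distrl /= rows.
  rewrite exchange_big /=.
  have -> : \sum_(j : 'I_N | nb j) \sum_r f r j * ip (al j) (al j) = p.-1 * Q.
    under eq_bigr do rewrite -big_distrl /= colsum big_distrl /=.
    rewrite exchange_big /Q big_distrr; apply: eq_bigr => r _ /=.
    rewrite (bigD1 (jr r)) //= big1 ?addn0; first by rewrite /fs (negbTE (nbjr r)) eqxx.
    by move=> j /andP [nbj njr]; rewrite /fs (negbTE nbj) (negbTE njr).
  lia.
have B2E : B2 = 2 * Q.
  have Hs : \sum_r ip (be (s r)) (be (s r)) = Q.
    by rewrite /Q [RHS](reindex_inj (@perm_inj _ s)).
  by rewrite /B2 big_split /= Hs addnn -mul2n.
have A1le : A1 <= B1.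
  apply: leq_sum => r _; apply: leq_sum => j _; rewrite leq_mul2l ip_le orbT //.
have A2le : A2 <= B2 by apply: leq_sum => r _; apply: ip_le.
have A1E : A1 = B1 by move: A12; rewrite B1E; nia.
have A2E : A2 = B2 by move: A12; rewrite B2E; nia.
have sid r : s r = r.
  apply: Uinj => i; rewrite !HU; congr (_ + _).
  apply: (ip_eq (x := be (s r)) (y := be r)).
  by apply: (@sum_eq_le _ predT (fun r => 2 * ip (be (s r)) (be r))
     (fun r => ip (be (s r)) (be (s r)) + ip (be r) (be r))) => // r' _; apply: ip_le.
have s1 : s = 1%g by apply/permP => r; rewrite perm1 sid.
split => //.
have inner r : forall j, nb j -> f r j * (2 * ip (al j) (be r)) =
     f r j * (ip (al j) (al j) + ip (be r) (be r)).
  apply: (@sum_eq_le _ nb) => [j _|]; first by rewrite leq_mul2l ip_le orbT.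
  apply: (@sum_eq_le _ predT (fun r => \sum_(j : 'I_N | nb j) f r j * (2 * ip (al j) (be r)))
     (fun r => \sum_(j : 'I_N | nb j) f r j * (ip (al j) (al j) + ip (be r) (be r)))) => //.
  by move=> r' _; apply: leq_sum => j _; rewrite leq_mul2l ip_le orbT.
have off r j : nb j -> j != jr r -> f r j = 0%N.
  move=> nbj njr.
  case: (boolP [exists r', j == jr r']) => [/existsP [r' /eqP jE] | /existsPn nJ].
    case: (posnP (f r j)) => // fpos.
    have := inner r j nbj; move/eqP; rewrite eqn_mul2l (negbTE (lt0n_neq0 fpos)) /= => /eqP E.
    have Eab := ip_eq E.
    have rr : r' = r.
      apply: Uinj => i; rewrite !HU; congr (_ + _); by rewrite -jE Eab.
    by move: njr; rewrite jE rr eqxx.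
  have : \sum_r f r j == 0%N.
    rewrite colsum sum_nat_eq0; apply/forall_inP => r' _.
    by rewrite /fs (negbTE nbj) (negbTE (nJ r')).
  by rewrite sum_nat_eq0 => /forall_inP /(_ r isT) /eqP.
move=> r j; rewrite /fs.
case: ifP => bj; first by rewrite blk.
case: eqP => [->|/eqP njr]; last by apply: off => //; rewrite /nb bj.
rewrite -(rows r) (bigD1 (jr r)) //= big1 ?addn0 // => j' /andP [nbj' nj'].
exact: off.
Qed.

Local Open Scope ring_scope.

Lemma redQ0 p : redQ p 0 = 0.
Proof. by rewrite /redQ mul0r. Qed.

Lemma redP_coef N p (P : {mpoly rat[N]}) m : (redP p P)@_m = redQ p P@_m.
Proof.
rewrite /redP raddf_sum /=.
under eq_bigr do rewrite mcoeffZ mcoeffX.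
case: (boolP (m \in msupp P)) => Hm.
  rewrite (bigD1_seq m) ?msupp_uniq //= eqxx mulr1 big1 ?addr0 // => m' /negbTE ->.
  by rewrite mulr0.
rewrite memN_msupp_eq0 // redQ0 big_seq big1 // => m' Hm'.
have /negbTE -> : m' != m by apply: contraNneq Hm => <-.
by rewrite mulr0.
Qed.

Definition mon N p mu (nu : NuBox N p mu) : 'X_{1..N} := [multinom (nu j : nat) | j < N].

Lemma mon_inj N p mu : injective (@mon N p mu).
Proof.
move=> nu nu' /mnmP E; apply/ffunP => j; apply/val_inj.
by have := E j; rewrite !mnmE.
Qed.

Lemma prod_scaleX N (R : comNzRingType) (I : finType) (c : I -> R) (m : I -> 'X_{1..N}) :
  \prod_i (c i *: 'X_[m i]) = (\prod_i c i) *: 'X_[\sum_i m i] :> {mpoly R[N]}.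
Proof.
under eq_bigr do rewrite -mul_mpolyC.
rewrite big_split /= -rmorph_prod mul_mpolyC; congr (_ *: _).
by rewrite (big_morph (fun m => 'X_[m]) (@mpolyXD _ _) (@mpolyX0 _ _)).
Qed.

Lemma det_coef N (F : comNzRingType) k (T : finType) (w : 'I_k -> 'I_k -> T -> F)
  (mo : T -> 'X_{1..N}) (A : 'M[{mpoly F[N]}]_k) M :
  (forall r c, A r c = \sum_t w r c t *: 'X_[mo t]) ->
  (\det A)@_M = \sum_(s : 'S_k) (-1) ^+ s *
     \sum_(f : {ffun 'I_k -> T}) (\prod_r w r (s r) (f r)) * ((\sum_r mo (f r))%MM == M)%:R.
Proof.
move=> HA; rewrite /determinant raddf_sum; apply: eq_bigr => s _.
rewrite -(rmorph_sign (@mpolyC N F)) /= mcoeffCM; congr (_ * _).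
under eq_bigr do rewrite HA.
rewrite bigA_distr_bigA raddf_sum; apply: eq_bigr => f _.
by rewrite prod_scaleX /= mcoeffZ mcoeffX.
Qed.

Definition Pr n N d p (I : {set 'I_n.+1}) (a : 'I_N -> 'I_n.+1 -> nat)
  (u v : Ubox n d (mu1 d #|I|)) (nu : NuBox N p (mu1 d #|I|)) : bool :=
  [forall i : 'I_n.+2,
     (\sum_(j < N) (nu j : nat) * aplus a j i + v i == p * u i)%N].

Definition cf N p mu (nu : NuBox N p mu) : 'F_p :=
  redQ p (((-1) ^+ mu) / ((\prod_(j < N) (nu j : nat)`!)%N)%:R).

Lemma sum_pick1 (T : finType) (R : pzSemiRingType) (P : pred T) (F : T -> R) t0 :
  \sum_(t | P t) F t * (t == t0)%:R = if P t0 then F t0 else 0.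
Proof.
rewrite big_mkcond (bigD1 t0) //= eqxx mulr1 big1 ?addr0 => [|t /negbTE ->].
  by case: ifP.
by case: ifP; rewrite ?mulr0.
Qed.

Lemma entryE n N d p (I : {set 'I_n.+1}) (a : 'I_N -> 'I_n.+1 -> nat) r c :
  Abar d p I a r c = \sum_(nu : NuBox N p (mu1 d #|I|))
     ((Pr a (enum_val r) (enum_val c) nu)%:R * cf nu) *: 'X_[mon nu].
Proof.
rewrite mxE; apply/mpolyP => m.
rewrite redP_coef /Aentry !raddf_sum /=.
under eq_bigr do rewrite mcoeffZ mcoeffX.
under [RHS]eq_bigr do rewrite mcoeffZ mcoeffX.
case: (pickP (fun nu : NuBox N p (mu1 d #|I|) => mon nu == m)) => [nu0 /eqP E|none].
  have key nu : (mon nu == m) = (nu == nu0).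
    by rewrite -E; apply/eqP/eqP => [/mon_inj|->].
  under eq_bigr do rewrite key.
  under [RHS]eq_bigr do rewrite key.
  rewrite !sum_pick1 /=.
  by rewrite /Pr; case: ifP; rewrite ?mul1r ?mul0r ?redQ0.
rewrite big1 ?redQ0; last by move=> nu _; rewrite none mulr0.
by rewrite big1 // => nu _; rewrite none mulr0.
Qed.

Lemma redQ_sign (p mu k : nat) : (0 < k)%N ->
  redQ p ((-1) ^+ mu / k%:R) = (-1) ^+ mu / k%:R.
Proof.
move=> k0.
have E : ((-1) ^+ mu / k%:R : rat) = ((-1) ^+ mu : int)%:~R / (k%:Z)%:~R.
  by rewrite rmorph_sign.
have cp : coprime `|((-1) ^+ mu : int)|%N `|k%:Z|%N.
  by rewrite abszX /= exp1n coprime1n.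
rewrite /redQ E coprimeq_num // coprimeq_den //.
have -> : (k%:Z == 0) = false by clear E cp; case: k k0.
by rewrite gtr0_sg ?ltz_nat // mul1r rmorph_sign.
Qed.

Lemma cfE N p mu (nu : NuBox N p mu) :
  cf nu = (-1) ^+ mu / ((\prod_(j < N) (nu j : nat)`!)%N)%:R.
Proof. by rewrite /cf redQ_sign // prodn_gt0 // => j; exact: fact_gt0. Qed.

Lemma cf_lt N p mu (nu : NuBox N p mu) : prime p -> cf nu != 0 -> forall j, (nu j < p)%N.
Proof.
move=> pp; rewrite cfE => H j; rewrite ltnNge; apply/negP => pj.
move: H; suff -> : ((\prod_(j < N) (nu j : nat)`!)%N)%:R = 0 :> 'F_p.
  by rewrite invr0 mulr0 eqxx.
apply/eqP; rewrite -(dvdn_pcharf (pchar_Fp pp)).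
rewrite (bigD1 j) //=; apply: dvdn_mulr; apply: dvdn_fact.
by rewrite prime_gt0.
Qed.

Lemma cf_neq0 N p mu (nu : NuBox N p mu) : prime p -> (forall j, (nu j < p)%N) -> cf nu != 0.
Proof.
move=> pp lt; rewrite cfE mulf_neq0 ?signr_eq0 // invr_eq0.
rewrite -(dvdn_pcharf (pchar_Fp pp)) Euclid_dvd_prod // big1 // => j _.
rewrite fact_prod Euclid_dvd_prod // big1_seq // => i /andP [_].
rewrite mem_index_iota => /andP [i1 ik].
apply/negbTE; apply/negP => /(dvdn_leq i1); have := lt j; lia.
Qed.

Theorem theorem7p2 (p n d N : nat) (I : {set 'I_n.+1})
  (a : 'I_N -> 'I_n.+1 -> nat) :
  prime p -> (1 <= n)%N -> (2 <= d)%N ->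
  (forall j : 'I_N, (\sum_(i < n.+1) a j i)%N = d) ->
  (* N >= mu_I + |U^I_min|, with mu_I = mu1 - 1 *)
  (mu1 d #|I| + #|Umin d I| <= N.+1)%N ->
  (forall u, u \in Umin d I ->
     exists k : nat, [/\ (1 <= k)%N, (k <= #|Umin d I|)%N &
       exists j : 'I_N,
         (* j is the 0-based index of a_{mu_I + k} *)
         (j.+2 = mu1 d #|I| + k)%N /\
         forall i : 'I_n.+2,
           (u i : nat) = (aplus a j i +
              \sum_(j' < N | (j'.+1 < mu1 d #|I|)%N) aplus a j' i)%N]) ->
  \det (Abar d p I a) != 0.
Proof.
move=> pp n1 d2 asum Hbound Hk.
have p0 : (0 < p)%N by exact: prime_gt0.
pose S i := (\sum_(j : 'I_N | (j.+1 < mu1 d #|I|)%N) aplus a j i)%N.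
have HUr : forall r : 'I_#|Umin d I|, exists j : 'I_N, (mu1 d #|I| <= j.+1)%N &&
    [forall i, ((enum_val r : Ubox n d (mu1 d #|I|)) i : nat) == (aplus a j i + S i)%N].
  move=> r; have [k [k1 _ [j [jE Hi]]]] := Hk _ (enum_valP r).
  exists j; apply/andP; split; first lia.
  by apply/forallP => i; rewrite Hi.
have /fin_all_exists [jr Hjr] := HUr.
have jrnb (r : 'I_#|Umin d I|) : (mu1 d #|I| <= (jr r).+1)%N by case/andP: (Hjr r).
have HU (r : 'I_#|Umin d I|) i : ((enum_val r : Ubox n d (mu1 d #|I|)) i : nat) = (aplus a (jr r) i + S i)%N.
  by case/andP: (Hjr r) => _ /forallP /(_ i) /eqP.
have almax j : aplus a j ord_max = 1%N by rewrite /aplus ltnn.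
have mupos (r : 'I_#|Umin d I|) : (0 < mu1 d #|I|)%N.
  have := enum_valP r; rewrite inE => /and3P [_ _ /eqP <-].
  by rewrite HU almax add1n.
pose g (r : 'I_#|Umin d I|) (j : 'I_N) := fs (mu1 d #|I|) p jr r j.
have gle (r : 'I_#|Umin d I|) j : (g r j <= p.-1)%N by rewrite /g /fs; case: ifP => _ //; case: ifP.
pose Fstar : {ffun 'I_#|Umin d I| -> NuBox N p (mu1 d #|I|)} :=
  [ffun r => [ffun j => inord (g r j)]].
have FstarE (r : 'I_#|Umin d I|) j : (Fstar r j : nat) = g r j.
  rewrite !ffunE inordK // ltnS; apply: leq_trans (gle r j) _.
  have := mupos r; nia.
pose w (r c : 'I_#|Umin d I|) (nu : NuBox N p (mu1 d #|I|)) :=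
  (Pr a (enum_val r) (enum_val c) nu)%:R * cf nu.
pose M := (\sum_r mon (Fstar r))%MM.
have Hcoef := @det_coef N _ _ _ w (@mon N p (mu1 d #|I|)) (Abar d p I a) M
   (fun r c => @entryE n N d p I a r c).
have Pdiag (r : 'I_#|Umin d I|) : Pr a (enum_val r) (enum_val r) (Fstar r).
  apply/forallP => i; apply/eqP.
  under eq_bigr do rewrite FstarE.
  rewrite (bigID (fun j : 'I_N => (j.+1 < mu1 d #|I|)%N)) /=.
  rewrite (eq_bigr (fun j => p.-1 * aplus a j i)%N); last first.
    by move=> j bj; rewrite /g /fs bj.
  rewrite -big_distrr /= -/(S i).
  rewrite (bigD1 (jr r)) /=; last by rewrite -leqNgt.
  rewrite big1; last first.
    move=> j /andP [nbj njr]; rewrite /g /fs (negbTE nbj) (negbTE njr) //.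
  rewrite /g /fs ltnNge jrnb /= eqxx HU.
  nia.
have term (s : 'S_#|Umin d I|) (f : {ffun 'I_#|Umin d I| -> NuBox N p (mu1 d #|I|)}) :
    (\prod_r w r (s r) (f r)) * (((\sum_r mon (f r))%MM == M)%:R) =
    if (s == 1%g) && (f == Fstar) then \prod_r cf (Fstar r) else 0.
  case: ifP => [/andP [/eqP -> /eqP ->] | Hne].
    rewrite eqxx mulr1; apply: eq_bigr => r _.
    by rewrite perm1 /w Pdiag mul1r.
  case E: ((\sum_r mon (f r))%MM == M); last by rewrite mulr0.
  rewrite mulr1; apply/eqP; apply: contraFT Hne => /prodf_neq0 Hw.
  have Hpr (r : 'I_#|Umin d I|) : Pr a (enum_val r) (enum_val (s r)) (f r).
    by have := Hw r isT; rewrite /w; case: (Pr _ _ _ _); rewrite ?mul0r ?eqxx.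
  have Hcf (r : 'I_#|Umin d I|) : cf (f r) != 0.
    by have := Hw r isT; rewrite /w; case: (cf (f r) =P 0) => // ->; rewrite mulr0 eqxx.
  have Uinj (r r' : 'I_#|Umin d I|) : (forall i, ((enum_val r : Ubox n d (mu1 d #|I|)) i : nat) = (enum_val r' : Ubox n d (mu1 d #|I|)) i) -> r = r'.
    move=> H; apply: enum_val_inj; apply/(ffunP (enum_val r : Ubox n d (mu1 d #|I|))) => i; apply/val_inj; exact: H.
  have colsum (j : 'I_N) : (\sum_r (f r j : nat) = \sum_r fs (mu1 d #|I|) p jr r j)%N.
    have H := (mnmP _ _).1 (eqP E) j; rewrite /M !mnm_sumE in H.
    transitivity (\sum_r mon (f r) j)%N; first by apply: eq_bigr => r _; rewrite mnmE.
    by rewrite H; apply: eq_bigr => r _; rewrite mnmE FstarE.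
  have [s1 fE] := @key _ _ _ _ _ (fun r i => ((enum_val r : Ubox n d (mu1 d #|I|)) i : nat)) (aplus a) jr s
     (fun r j => (f r j : nat)) p0 almax jrnb HU
     Uinj
     (fun r i => eqP (forallP (Hpr r) i))
     (fun r j => cf_lt pp (Hcf r) j) colsum.
  rewrite s1 eqxx /=; apply/eqP/ffunP => r; apply/ffunP => j; apply/val_inj.
  by rewrite /= fE FstarE.
have R : \sum_(s : 'S_#|Umin d I|) (-1) ^+ s * \sum_(f : {ffun 'I_#|Umin d I| -> NuBox N p (mu1 d #|I|)})
    (\prod_r w r (s r) (f r)) * (((\sum_r mon (f r))%MM == M)%:R) = \prod_r cf (Fstar r).
  rewrite (bigD1 1%g) //= [X in _ + X]big1 ?addr0; last first.
    move=> s /negbTE sn1.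
    by rewrite big1 ?mulr0 // => f _; rewrite term sn1.
  rewrite odd_perm1 expr0 mul1r (bigD1 Fstar) //= [X in _ + X]big1 ?addr0.
    by rewrite term !eqxx.
  by move=> f /negbTE fn; rewrite term eqxx fn.
apply/eqP => H0; move: Hcoef; rewrite H0 mcoeff0 R => /esym /eqP.
apply/negP; apply/prodf_neq0 => r _; apply: cf_neq0 => // j.
by rewrite FstarE; have := gle r j; have := p0; lia.
Qed.
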